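(* Let $(q_k)_{k\ge1}$ be a sequence of integers with $q_k \ge 2$ for every $k \in \mathbb{N}$ and $\liminf_{k\to\infty} q_k/k > 3$. Then there exists a constant $C$ such that the following holds. For every $n \in \mathbb{N}$ and every collection $\mathcal{A}$ of hyperplanes in $Q := [q_1]\times\cdots\times[q_n]$ whose union is $Q$, either two distinct hyperplanes of $\mathcal{A}$ are parallel, or there exists $A \in \mathcal{A}$ with $F(A) \subseteq [C]$.
   Context: $[m] = \{1,\dots,m\}$. For finite sets $S_1,\dots,S_n$, a hyperplane in $Q = S_1\times\cdots\times S_n$ is a set $A = A_1\times\cdots\times A_n$ where each $A_k$ is either $S_k$ or a singleton subset of $S_k$. Its set of fixed coordinates is $F(A) = \{k : A_k \text{ is a singleton}\}$. Two hyperplanes $A, A'$ are parallel if $F(A) = F(A')$. *)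

(* Defs.v *)
From mathcomp Require Import all_boot all_order all_algebra.
Set Implicit Arguments. Unset Strict Implicit. Unset Printing Implicit Defensive.
Import Order.TTheory GRing.Theory Num.Theory.

(* The sequence (q_k)_{k>=1} is q : nat -> nat (q 0 is irrelevant).
   Coordinate k : 'I_n of the box corresponds to the paper's coordinate k+1,
   so S_{k+1} = [q (k+1)] = {1, ..., q (k+1)}. *)

Definition in_box (q : nat -> nat) (n : nat) (x : 'I_n -> nat) : Prop :=
  forall k : 'I_n, 1 <= x k <= q k.+1.

(* A hyperplane is described by, for each coordinate, either None (A_k = S_k)
   or Some a (A_k = {a}, with a in S_k). *)
Definition hyperplane (q : nat -> nat) (n : nat) (H : 'I_n -> option nat) : Prop :=
  forall (k : 'I_n) (a : nat), H k = Some a -> 1 <= a <= q k.+1.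

Definition in_hyp (n : nat) (H : 'I_n -> option nat) (x : 'I_n -> nat) : Prop :=
  forall (k : 'I_n) (a : nat), H k = Some a -> x k = a.

Definition fixed (n : nat) (H : 'I_n -> option nat) (k : 'I_n) : bool :=
  H k != None.

Definition parallel (n : nat) (H1 H2 : 'I_n -> option nat) : Prop :=
  forall k : 'I_n, fixed H1 k = fixed H2 k.

Definition fixed_within (n : nat) (H : 'I_n -> option nat) (C : nat) : Prop :=
  forall k : 'I_n, fixed H k -> k.+1 <= C.

(* Main.v *)
Require Import Defs.
From mathcomp Require Import all_boot all_order all_algebra.
From mathcomp Require Import ring lra.
From Stdlib Require Import Classical ClassicalEpsilon.
Import Order.TTheory GRing.Theory Num.Theory.
Local Open Scope ring_scope.

Section Analysis.
Variable q : nat -> nat.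
Variable th : rat.

Definition cg (j : nat) : rat := ((1 - th) * (q j.+1)%:R)^-1.
Definition Pp (i : nat) : rat := \prod_(j < i) (1 + 3 * cg j).
Definition T (i : nat) : rat := Pp i / (th ^+ 2 * (q i.+1)%:R ^+ 2).

Hypothesis th_ge0 : 0 <= th.
Hypothesis th_le1 : th <= 1.

Lemma cg_ge0 j : 0 <= cg j.
Proof. by rewrite /cg invr_ge0 mulr_ge0 ?ler0n ?subr_ge0. Qed.

Lemma Pp_ge0 i : 0 <= Pp i.
Proof. rewrite /Pp; apply: prodr_ge0 => j _; have := cg_ge0 j; lra. Qed.

Lemma T_ge0 i : 0 <= T i.
Proof. rewrite /T mulr_ge0 ?Pp_ge0 // invr_ge0 mulr_ge0 // exprn_ge0 //. Qed.

Lemma PpS i : Pp i.+1 = Pp i * (1 + 3 * cg i).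
Proof. by rewrite /Pp big_ord_recr. Qed.

Lemma tele (u : nat -> rat) a :
  (forall i, (a <= i)%N -> T i <= u i - u i.+1) ->
  forall b, (a <= b)%N -> \sum_(a <= i < b) T i <= u a - u b.
Proof.
move=> H; elim=> [|b IH] hab.
  by move: hab; rewrite leqn0 => /eqP ->; rewrite big_geq // subrr.
case: (ltngtP a b.+1) hab => // [hlt|->] _.
  rewrite ltnS in hlt.
  rewrite big_nat_recr //=.
  have := IH hlt; have := H b hlt; lra.
by rewrite big_geq // subrr.
Qed.

Lemma tail_classical (u0 : rat) a :
  (forall b, \sum_(a <= i < b) T i <= u0) ->
  exists C, forall n, \sum_(C <= i < n) T i < 1.
Proof.
move=> Hb; apply: NNPP => Hno.
have Hall : forall C, exists n, 1 <= \sum_(C <= i < n) T i.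
  move=> C; apply: NNPP => Hn; apply: Hno; exists C => n.
  rewrite ltNge; apply/negP => H1; apply: Hn; by exists n.
have Hm : forall m : nat, exists b, (a <= b)%N /\ m%:R <= \sum_(a <= i < b) T i.
  elim=> [|m [b [hab IH]]].
    by exists a; rewrite big_geq.
  have [n Hn] := Hall b.
  case: (leqP n b) => hnb.
    by move: Hn; rewrite big_geq // ler10.
  exists n; split; first by apply: leq_trans hab (ltnW hnb).
  rewrite (big_cat_nat hab (ltnW hnb)) /= -natr1; lra.
have u0ge : 0 <= u0 by apply: le_trans (Hb a); rewrite big_geq.
have [b [_ Hb2]] := Hm (Num.Def.archi_bound u0).
have := archi_boundP u0ge; have := Hb b; lra.
Qed.

End Analysis.
Lemma keyineq (g b s c x : rat) : 0 <= g -> 0 <= b -> b < 1 -> 1 <= s -> 0 <= c ->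
  c * (s + 1) <= b -> x <= g / (s + 1) ^+ 2 ->
  x <= (g / (1 - b)) / s - (g / (1 - b)) * (1 + c) / (s + 1).
Proof.
move=> g0 b0 b1 s1 c0 cb xg.
have sn : s != 0 by apply/eqP => h; move: s1; rewrite h; lra.
have s1n : s + 1 != 0 by apply/eqP => h; lra.
have bn : 1 - b != 0 by apply/eqP => h; lra.
have -> : (g / (1 - b)) / s - (g / (1 - b)) * (1 + c) / (s + 1) =
   (g / (1 - b)) * (1 - c * s) / s / (s + 1).
  by field; rewrite s1n sn bn.
apply: le_trans xg _.
have hs : 0 < s by lra.
have hs1 : 0 < s + 1 by lra.
have hb : 0 < 1 - b by lra.
rewrite ler_pdivrMr ?exprn_gt0 //.
have -> : g / (1 - b) * (1 - c * s) / s / (s + 1) * (s + 1) ^+ 2 =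
   g * ((1 - c * s) * (s + 1)) / ((1 - b) * s).
  by field; rewrite s1n sn bn.
rewrite ler_pdivlMr ?mulr_gt0 //.
have h1 : 1 - b <= 1 - c * s by nra.
have h2 : (1 - b) * s <= (1 - c * s) * (s + 1) by nra.
nra.
Qed.

Definition lamr (th r : rat) := (th ^+ 2 * r ^+ 2)^-1 / (1 - 6 / (r + 3)).

Lemma Tstep_abs (P th r s Qv : rat) : 0 <= P -> 0 < th -> 3 < r -> th * (2 * r) = r - 3 ->
  1 <= s -> r * (s + 1) <= Qv ->
  P / (th ^+ 2 * Qv ^+ 2) <=
    lamr th r * P / s - lamr th r * (P * (1 + 3 * ((1 - th) * Qv)^-1)) / (s + 1).
Proof.
move=> P0 th0 r3 thr s1 rQ; set lam := lamr th r.
have sn : s != 0 by apply/eqP => h; move: s1; rewrite h; lra.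
have s1n : s + 1 != 0 by apply/eqP => h; lra.
have -> : lam * P / s - lam * (P * (1 + 3 * ((1 - th) * Qv)^-1)) / (s + 1)
   = P * (lam / s - lam * (1 + 3 * ((1 - th) * Qv)^-1) / (s + 1)).
  have Qvn : Qv != 0 by apply/eqP => h; nra.
  have thn : 1 - th != 0 by apply/eqP => h; nra.
  by field; rewrite s1n sn Qvn thn.
apply: ler_wpM2l => //.
have Qv0 : 0 < Qv by nra.
have hA : 0 < (1 - th) * Qv.
  apply: mulr_gt0 => //; nra.
have r30 : 0 < r + 3 by lra.
apply: keyineq.
- by rewrite invr_ge0; apply: mulr_ge0; apply: exprn_ge0; lra.
- by apply: divr_ge0; lra.
- by rewrite ltr_pdivrMr //; lra.
- done.
- by apply: mulr_ge0; [lra| rewrite invr_ge0; apply: ltW].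
- rewrite mulrAC ler_pdivrMr // mulrAC ler_pdivlMr //.
  have e : (1 - th) * (2 * r) = r + 3 by lra.
  nra.
- rewrite -invfM.
  rewrite lef_pV2 ?posrE ?mulr_gt0 ?exprn_gt0 //; try lra.
  have h1 : (r * (s + 1)) ^+ 2 <= Qv ^+ 2.
    rewrite ler_sqr ?nnegrE //; nra.
  rewrite -mulrA ler_wpM2l ?exprn_ge0 //; first (by apply: ltW); rewrite -exprMn //.
Qed.

Lemma lamr_ge0 th r : 3 < r -> 0 <= lamr th r.
Proof.
move=> r3; rewrite /lamr divr_ge0 //.
  by rewrite invr_ge0 mulr_ge0 ?sqr_ge0.
have r30 : 0 < r + 3 by lra.
rewrite subr_ge0 ler_pdivrMr //; lra.
Qed.

Lemma exists_C q (r : rat) K th : 3 < r -> 0 < th -> th * (2 * r) = r - 3 ->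
  (forall k, (K <= k)%N -> r * k%:R <= (q k)%:R) ->
  exists C, forall n, \sum_(C <= i < n) T q th i < 1.
Proof.
move=> r3 th0 thr hq.
have th1 : th <= 1 by nra.
have th00 : 0 <= th by lra.
pose u j := lamr th r * Pp q th j / j%:R.
have u0 : forall j, 0 <= u j.
  move=> j; rewrite /u divr_ge0 // mulr_ge0 ?lamr_ge0 ?Pp_ge0 //.
have step : forall i, (K.+1 <= i)%N -> T q th i <= u i - u i.+1.
  move=> i hi.
  rewrite /u PpS -(natr1 i) /cg /T.
  apply: Tstep_abs => //; first exact: Pp_ge0.
    by rewrite ler1n; apply: leq_trans hi.
  rewrite natr1; apply: hq; exact: leq_trans (ltnW hi) (leqnSn i).
apply: (@tail_classical q th (u K.+1) K.+1) => b.
case: (leqP K.+1 b) => hb.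
  have := @tele q th u K.+1 step b hb; have := u0 b; lra.
by rewrite big_geq ?u0 // ltnW.
Qed.

Section Comb.
Variable q : nat -> nat.
Variable th : rat.
Variable n : nat.
Variable Acol : ('I_n -> option nat) -> Prop.
Hypothesis hq2 : forall j : nat, (2 <= q j.+1)%N.
Hypothesis th0 : 0 < th.
Hypothesis th1 : th < 1.
Hypothesis Hhyp : forall H, Acol H -> hyperplane q H.
Hypothesis Hinj : forall H1 H2, Acol H1 -> Acol H2 -> parallel H1 H2 -> H1 = H2.

Definition hyp (S : {set 'I_n}) : option ('I_n -> option nat) :=
  match excluded_middle_informative
          (exists H, Acol H /\ forall j, fixed H j = (j \in S)) with
  | left e => Some (proj1_sig (constructive_indefinite_description _ e))
  | right _ => None
  end.

Lemma hypP S H : hyp S = Some H -> Acol H /\ forall j, fixed H j = (j \in S).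
Proof.
rewrite /hyp; case: excluded_middle_informative => // e [<-].
by case: constructive_indefinite_description.
Qed.

Lemma hyp_of H : Acol H -> hyp [set j | fixed H j] = Some H.
Proof.
move=> aH; rewrite /hyp; case: excluded_middle_informative => [e|ne]; last first.
  by exfalso; apply: ne; exists H; split => // j; rewrite inE.
case: constructive_indefinite_description => H' [aH' fH'] /=.
congr Some; apply: Hinj => // j; by rewrite fH' inE.
Qed.

Definition agree (H : 'I_n -> option nat) (x : 'I_n -> nat) (j : 'I_n) : bool :=
  if H j is Some a then x j == a else true.

Definition gf (m : nat) (x : 'I_n -> nat) (H H' : 'I_n -> option nat) (j : 'I_n) : rat :=
  if (j < m)%N then (agree H x j && agree H' x j)%:R
  else (if fixed H j || fixed H' j then cg q th j else 1).

Definition topb (S : {set 'I_n}) (k : 'I_n) : bool :=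
  (k \in S) && [forall j in S, (j <= k)%N].

Definition Dk (k : 'I_n) : rat := th ^+ 2 * (q k.+1)%:R ^+ 2.

Definition pterm (m : nat) (x : 'I_n -> nat) (k : 'I_n) (S S' : {set 'I_n}) : rat :=
  match hyp S, hyp S' with
  | Some H, Some H' => (\prod_(j : 'I_n | (j < k)%N) gf m x H H' j) / Dk k
  | _, _ => 0
  end.

Definition Psi (m : nat) (x : 'I_n -> nat) : rat :=
  \sum_(k : 'I_n | (m <= k)%N) \sum_(S | topb S k) \sum_(S' | topb S' k) pterm m x k S S'.

Lemma th_ge0 : 0 <= th. Proof. exact: ltW. Qed.
Lemma th_le1 : th <= 1. Proof. exact: ltW. Qed.

Lemma cg_ge0' j : 0 <= cg q th j.
Proof. by apply: cg_ge0; exact: th_le1. Qed.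

Lemma Dk_gt0 k : 0 < Dk k.
Proof.
rewrite /Dk mulr_gt0 ?exprn_gt0 // ltr0n; apply: leq_trans (hq2 k) => //.
Qed.

Lemma gf_ge0 m x H H' j : 0 <= gf m x H H' j.
Proof. rewrite /gf; case: ifP => _; first by rewrite ler0n. by case: ifP => _; rewrite ?cg_ge0'. Qed.

Lemma pterm_ge0 m x k S S' : 0 <= pterm m x k S S'.
Proof.
rewrite /pterm; case: (hyp S) => // H; case: (hyp S') => // H'.
rewrite divr_ge0 ?(ltW (Dk_gt0 k)) //; apply: prodr_ge0 => j _; exact: gf_ge0.
Qed.


Lemma prod_boolR (I : finType) (P : pred I) (b : I -> bool) :
  \prod_(i | P i) ((b i)%:R : rat) = [forall i, P i ==> b i]%:R.
Proof.
case: forallP => [h|h].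
  by rewrite big1 // => i Pi; move: (h i); rewrite Pi /= => ->.
have [i] : exists i, ~~ (P i ==> b i).
  by apply: NNPP => hn; apply: h => i; apply: NNPP => hi; apply: hn; exists i; apply/negP.
rewrite negb_imply => /andP [Pi nbi].
by rewrite (bigD1 i) //= (negbTE nbi) mul0r.
Qed.

Definition term0 m x k := \sum_(S | topb S k) \sum_(S' | topb S' k) pterm m x k S S'.
Definition rest m x := \sum_(k : 'I_n | (m < k)%N) term0 m x k.

Lemma PsiS m x : Psi m.+1 x = \sum_(k : 'I_n | (m < k)%N) term0 m.+1 x k.
Proof. by []. Qed.

Lemma Psi_split m x (k : 'I_n) : nat_of_ord k = m -> Psi m x = term0 m x k + rest m x.
Proof.
move=> hk; rewrite /Psi (bigD1 k) /=; last by rewrite hk.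
congr (_ + _); apply: eq_bigl => j.
rewrite ltn_neqAle -hk andbC; congr (_ && _); by rewrite eq_sym.
Qed.

Definition consb m x S := if hyp S is Some H then [forall j : 'I_n, (j < m)%N ==> agree H x j] else false.

Definition Ncount m x (k : 'I_n) : rat := \sum_(S | topb S k) (consb m x S)%:R.

Lemma term0_eq m x (k : 'I_n) : nat_of_ord k = m -> term0 m x k = Ncount m x k ^+ 2 / Dk k.
Proof.
move=> hk; rewrite /term0 /Ncount expr2 -mulrA mulr_suml.
apply: eq_bigr => S _; rewrite mulr_suml mulr_sumr; apply: eq_bigr => S' _.
rewrite /pterm /consb.
case: (hyp S) => [H|]; last by rewrite mul0r.
case: (hyp S') => [H'|]; last by rewrite mul0r mulr0.
rewrite mulrA; congr (_ / _).
rewrite -!prod_boolR -big_split /=; apply: eq_big => [j|j hj]; first by rewrite hk.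
by rewrite /gf -hk hj -mulnb natrM.
Qed.


Lemma sum_pairs (k : 'I_n) (c : nat -> rat) :
  \sum_(S | topb S k) \sum_(S' | topb S' k)
     \prod_(j : 'I_n | (j < k)%N) (if (j \in S) || (j \in S') then c j else 1)
  = \prod_(j : 'I_n | (j < k)%N) (1 + 3 * c j).
Proof.
rewrite pair_big_dep /=.
rewrite (reindex (fun f : {ffun 'I_n -> bool * bool} => ([set j | (f j).1], [set j | (f j).2]))) /=; last first.
  apply: onW_bij.
  exists (fun p : {set 'I_n} * {set 'I_n} => [ffun j => (j \in p.1, j \in p.2)]).
    by move=> f; apply/ffunP => j; rewrite ffunE !inE; case: (f j).
  by move=> [S S']; congr pair; apply/setP => j; rewrite !inE ffunE.
pose D := fun (j : 'I_n) (b : bool * bool) =>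
  if (j < k)%N then true else if j == k then b == (true, true) else b == (false, false).
pose psi := fun (j : 'I_n) (b : bool * bool) =>
  if (j < k)%N then (if b.1 || b.2 then c j else 1) else 1.
have e1 : \prod_(j : 'I_n | (j < k)%N) (1 + 3 * c j) = \prod_j \sum_(b | D j b) psi j b.
  rewrite big_mkcond /=; apply: eq_bigr => j _.
  rewrite /D /psi; case: ltnP => hj.
    rewrite -(pair_bigA _ (fun b1 b2 => if b1 || b2 then c j else 1)) /= !big_bool /=.
    ring.
  by case: (eqVneq j k) => [_|jk]; rewrite big_pred1_eq.
rewrite e1 bigA_distr_big_dep /=.
apply: eq_big => [f|f _].
  apply/idP/familyP.
    move=> /andP [/andP [k1 /forallP a1] /andP [k2 /forallP a2]] j.
    rewrite !inE in k1 k2.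
    rewrite unfold_in /D; case: ltnP => hj //.
    case: eqVneq => [->|jk]; first by case: (f k) k1 k2 => [[] []].
    have hkj : (k < j)%N by rewrite ltn_neqAle hj andbT; apply: contra jk => /eqP h; apply/eqP/val_inj.
    move: (a1 j) (a2 j); rewrite !inE; case: (f j) => [b1 b2] /=.
    by case: b1; case: b2; rewrite //= leqNgt hkj.
  move=> h; have := h k; rewrite unfold_in /D ltnn eqxx => /eqP fk.
  rewrite /topb !inE fk /=.
  apply/andP; split; apply/forallP => j; rewrite inE; apply/implyP => hj; rewrite leqNgt;
    apply/negP => hkj; move: (h j); rewrite unfold_in /D ltnNge (ltnW hkj) /=;
    (have -> : (j == k) = false by apply/negbTE; rewrite neq_ltn hkj orbT);
    by move/eqP => e; move: hj; rewrite e.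
rewrite big_mkcond /=; apply: eq_bigr => j _; rewrite /psi !inE; by case: ltnP.
Qed.

Section Count.
Variables (m : nat) (x : 'I_n -> nat) (mo : 'I_n).

Definition hval S : nat := if hyp S is Some H then odflt 0%N (H mo) else 0%N.
Definition blocked (t : 'I_(q mo.+1).+1) : bool :=
  [exists S, [&& topb S mo, consb m x S & hval S == val t]].
Definition goodS : {set 'I_(q mo.+1).+1} := [set t | (0 < val t)%N && ~~ blocked t].

Lemma Ncount_card : Ncount m x mo = #|[set S | topb S mo && consb m x S]|%:R.
Proof.
rewrite /Ncount -sum1dep_card natr_sum [RHS]big_mkcondr /=; apply: eq_bigr => S _.
by case: (consb m x S).
Qed.

Lemma count_good : (q mo.+1)%:R - Ncount m x mo <= #|goodS|%:R.
Proof.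
rewrite Ncount_card.
set consS := [set S | topb S mo && consb m x S].
set blS := [set t | blocked t].
have h1 : (#|blS| <= #|consS|)%N.
  apply: leq_trans (leq_imset_card (fun S => (inord (hval S) : 'I_(q mo.+1).+1)) consS).
  apply: subset_leq_card; apply/subsetP => t; rewrite inE => /existsP [S /and3P [tS cS hS]].
  apply/imsetP; exists S; first by rewrite inE tS cS.
  by rewrite (eqP hS) inord_val.
have h2 : (q mo.+1 <= #|goodS| + #|blS|)%N.
  apply: (@leq_trans #|[set~ (ord0 : 'I_(q mo.+1).+1)]|); first by rewrite cardsC1 card_ord.
  apply: leq_trans (leq_card_setU goodS blS).
  apply: subset_leq_card; apply/subsetP => t; rewrite !inE => tn0.
  have tp : (0 < val t)%N by rewrite lt0n; apply: contra tn0 => /eqP h; apply/eqP/val_inj.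
  by rewrite tp /=; case: (blocked t).
have h3 : (q mo.+1 <= #|goodS| + #|consS|)%N by apply: leq_trans h2 _; rewrite leq_add2l.
rewrite lerBlDr -natrD ler_nat; by [].
Qed.


Definition upd (t : nat) : 'I_n -> nat := fun j => if j == mo then t else x j.

Lemma sum_val_le1 (a : nat) : \sum_(t in goodS) ((val t == a)%:R : rat) <= 1.
Proof.
case: (pickP (fun t => (t \in goodS) && (val t == a))) => [t0 /andP [t0g t0a] | none].
  rewrite (bigD1 t0) //= t0a big1 ?addr0 // => t /andP [_ tn].
  case e: (val t == a) => //; move: tn; have -> : t = t0 by apply: val_inj; rewrite (eqP e) (eqP t0a).
  by rewrite eqxx.
rewrite big1 // => t tg; move: (none t); rewrite tg /=; by case: (val t == a).
Qed.

Hypothesis hmo : nat_of_ord mo = m.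
Hypothesis hU : 1 <= #|goodS|%:R * cg q th mo.

Lemma prod_split m' y H H' (k : 'I_n) : (mo < k)%N ->
  \prod_(j : 'I_n | (j < k)%N) gf m' y H H' j =
  gf m' y H H' mo * \prod_(j : 'I_n | (j < k)%N && (j != mo)) gf m' y H H' j.
Proof. by move=> hk; rewrite (bigD1 mo). Qed.

Lemma avg (k : 'I_n) S S' : (m < k)%N ->
  \sum_(t in goodS) pterm m.+1 (upd (val t)) k S S' <= #|goodS|%:R * pterm m x k S S'.
Proof.
move=> hk; have hk' : (mo < k)%N by rewrite hmo.
rewrite /pterm; case: (hyp S) => [H|]; last by rewrite big1 // mulr0.
case: (hyp S') => [H'|]; last by rewrite big1 // mulr0.
set R := \prod_(j : 'I_n | (j < k)%N && (j != mo)) gf m x H H' j.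
have eR : forall t, \prod_(j : 'I_n | (j < k)%N && (j != mo)) gf m.+1 (upd t) H H' j = R.
  move=> t; apply: eq_bigr => j /andP [_ jn].
  rewrite /gf /upd /agree (negbTE jn) ltnS leq_eqVlt.
  have -> : (nat_of_ord j == m) = false.
    by apply/negbTE; rewrite -hmo; exact: jn.
  by [].
under eq_bigr => t _ do rewrite prod_split // eR.
rewrite prod_split // -/R -!mulr_suml !mulrA.
have R0 : 0 <= R by apply: prodr_ge0 => j _; exact: gf_ge0.
rewrite ler_wpM2r ?invr_ge0 ?(ltW (Dk_gt0 k)) // ler_wpM2r //.
have hmm : ~~ (mo < m)%N by rewrite hmo ltnn.
have hm1 : (mo < m.+1)%N by rewrite hmo.
rewrite {2}/gf (negbTE hmm).
under eq_bigr => t _ do rewrite /gf hm1 /agree /upd eqxx.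
rewrite /fixed.
case eH: (H mo) => [a|] /=.
  apply: le_trans hU; apply: le_trans (sum_val_le1 a).
  by apply: ler_sum => t _; rewrite ler_nat; case: (_ == a); case: (match H' mo with Some _ => _ | None => _ end).
case eH': (H' mo) => [a|] /=.
  apply: le_trans hU; apply: le_trans (sum_val_le1 a).
  by apply: ler_sum => t _; rewrite ler_nat.
by rewrite sumr_const mulr1.
Qed.

End Count.


Lemma term0_ge0 m x k : 0 <= term0 m x k.
Proof. by apply: sumr_ge0 => S _; apply: sumr_ge0 => S' _; exact: pterm_ge0. Qed.

Lemma rest_ge0 m x : 0 <= rest m x.
Proof. by apply: sumr_ge0 => k _; exact: term0_ge0. Qed.

Lemma step m x (mo : 'I_n) (hmo : nat_of_ord mo = m) : Psi m x < 1 ->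
  exists t : nat, [/\ (1 <= t <= q mo.+1)%N,
   (forall S H, topb S mo -> hyp S = Some H -> consb m x S -> H mo != Some t)
   & Psi m.+1 (upd x mo t) <= Psi m x].
Proof.
move=> hP.
have hsplit := @Psi_split m x mo hmo.
have hr0 := rest_ge0 m x.
have ht0 : term0 m x mo < 1 by rewrite hsplit in hP; lra.
rewrite (@term0_eq m x mo hmo) in ht0.
have hN0 : 0 <= Ncount m x mo by apply: sumr_ge0 => S _; exact: ler0n.
have hD := Dk_gt0 mo.
have hQ : 0 < (q mo.+1)%:R :> rat by rewrite ltr0n; apply: leq_trans (hq2 mo).
have hN : Ncount m x mo < th * (q mo.+1)%:R.
  rewrite ltr_pdivrMr // mul1r /Dk -exprMn in ht0.
  rewrite -(@ltr_pXn2r _ 2) // nnegrE; last by apply: mulr_ge0; [exact: th_ge0| exact: ltW].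
have hc := count_good m x mo.
have hU : 1 <= #|goodS m x mo|%:R * cg q th mo.
  rewrite /cg; have h1 : 0 < (1 - th) * (q mo.+1)%:R by apply: mulr_gt0 => //; rewrite subr_gt0.
  rewrite ler_pdivlMr // mul1r mulrBl mul1r; lra.
have hsum : \sum_(t in goodS m x mo) Psi m.+1 (upd x mo (val t)) <= #|goodS m x mo|%:R * rest m x.
  rewrite /rest mulr_sumr /Psi.
  rewrite exchange_big /=; apply: ler_sum => k hk.
  rewrite /term0 mulr_sumr exchange_big /=; apply: ler_sum => S hS.
  rewrite mulr_sumr exchange_big /=; apply: ler_sum => S' hS'.
  exact: avg.
have hne : (0 < #|goodS m x mo|)%N.
  rewrite lt0n; apply/eqP => h0; move: hU; rewrite h0 mul0r; lra.
have [t tg ht] : exists2 t, t \in goodS m x mo & Psi m.+1 (upd x mo (val t)) <= rest m x.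
  apply: NNPP => hno.
  have hlt : \sum_(t in goodS m x mo) rest m x < \sum_(t in goodS m x mo) Psi m.+1 (upd x mo (val t)).
    apply: ltr_sum.
      have [t0 t0g] := card_gt0P hne.
      by apply/hasP; exists t0; [rewrite mem_index_enum|].
    move=> t tg; rewrite ltNge; apply/negP => hle; apply: hno; by exists t.
  move: hlt; rewrite sumr_const -mulr_natl; lra.
exists (val t); split.
- move: tg; rewrite inE => /andP [t0 _]; by rewrite t0 -ltnS ltn_ord.
- move=> S H tS hS cS; apply/negP => /eqP hH.
  move: tg; rewrite inE => /andP [_ /negP]; apply.
  apply/existsP; exists S; rewrite tS cS /= /hval hS hH /=; done.
- have := term0_ge0 m x mo; rewrite hsplit; lra.
Qed.


Lemma agree_upd H x mo t j : j != mo -> agree H (upd x mo t) j = agree H x j.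
Proof. by move=> jn; rewrite /agree /upd (negbTE jn). Qed.

Lemma invariant_ex x0 : Psi 0 x0 < 1 -> forall m, (m <= n)%N -> exists x,
  [/\ Psi m x < 1, (forall j : 'I_n, (j < m)%N -> (1 <= x j <= q j.+1)%N) &
      (forall S H (k : 'I_n), hyp S = Some H -> topb S k -> (k < m)%N ->
          exists j : 'I_n, (j <= k)%N /\ ~~ agree H x j)].
Proof.
move=> h0; elim=> [|m IH] hm.
  by exists x0; split.
have [x [hP hbox hsep]] := IH (ltnW hm).
pose mo := Ordinal hm.
have hmo : nat_of_ord mo = m by [].
have [t [ht hfree hle]] := @step m x mo hmo hP.
exists (upd x mo t); split.
- exact: le_lt_trans hle hP.
- move=> j; rewrite ltnS leq_eqVlt => /orP [/eqP hj|hj].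
    have -> : j = mo by apply: val_inj.
    by rewrite /upd eqxx.
  have jn : j != mo by rewrite neq_ltn hj.
  by rewrite /upd (negbTE jn); apply: hbox.
- move=> S H k hS tS; rewrite ltnS leq_eqVlt => /orP [/eqP hk|hk].
    have ek : k = mo by apply: val_inj.
    rewrite ek in tS *.
    case cS: (consb m x S).
      have := hfree S H tS hS cS.
      have [_ fH] := @hypP S H hS.
      have : fixed H mo by rewrite fH; case/andP: tS.
      rewrite /fixed; case eH: (H mo) => [a|] // _ hne.
      exists mo; split => //; rewrite /agree /upd eqxx eH.
      by apply/negP => /eqP ha; move: hne; rewrite ha eqxx.
    move: cS; rewrite /consb hS => /negbT /forallP hn.
    have [j hj] : exists j : 'I_n, ~~ ((j < m)%N ==> agree H x j).
      by apply: NNPP => hc; apply: hn => j; apply: NNPP => hj; apply: hc; exists j; apply/negP.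
    move: hj; rewrite negb_imply => /andP [jm ja].
    have jn : j != mo by rewrite neq_ltn jm.
    exists j; split; first by apply: ltnW.
    by rewrite agree_upd.
  have [j [jk ja]] := hsep S H k hS tS hk.
  have jn : j != mo by rewrite neq_ltn (leq_ltn_trans jk hk).
  by exists j; rewrite agree_upd.
Qed.

Lemma base_bound C x : (forall H, Acol H -> exists j : 'I_n, fixed H j && (C <= j)%N) ->
  Psi 0 x <= \sum_(C <= i < n) T q th i.
Proof.
move=> hC.
rewrite /Psi big_geq_mkord /= big_mkcond [X in _ <= X]big_mkcond /=.
apply: ler_sum => k _.
case: (leqP C k) => hk /=.
  apply: (@le_trans _ _ (\sum_(S | topb S k) \sum_(S' | topb S' k)
     (\prod_(j : 'I_n | (j < k)%N) (if (j \in S) || (j \in S') then cg q th j else 1)) / Dk k)).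
    apply: ler_sum => S _; apply: ler_sum => S' _.
    rewrite /pterm; case hS: (hyp S) => [H|]; last first.
      by apply: divr_ge0; [apply: prodr_ge0 => j _; case: ifP => _; rewrite ?cg_ge0' | exact: ltW (Dk_gt0 k)].
    case hS': (hyp S') => [H'|]; last first.
      by apply: divr_ge0; [apply: prodr_ge0 => j _; case: ifP => _; rewrite ?cg_ge0' | exact: ltW (Dk_gt0 k)].
    have [_ f1] := @hypP S H hS; have [_ f2] := @hypP S' H' hS'.
    apply: ler_wpM2r; first by rewrite invr_ge0; exact: ltW (Dk_gt0 k).
    by apply: ler_prod => j _; rewrite /gf ltn0 f1 f2 /= lexx andbT; case: ifP => _; rewrite ?cg_ge0'.
  under eq_bigr => S _ do rewrite -mulr_suml.
  rewrite -mulr_suml sum_pairs /T /Pp /Dk.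
  by rewrite (big_ord_widen n (fun j => 1 + 3 * cg q th j)) // ltnW.
rewrite big1 // => S tS; rewrite big1 // => S' _.
rewrite /pterm; case hS: (hyp S) => [H|] //.
have [aH f1] := @hypP S H hS.
have [j /andP [fj Cj]] := hC H aH.
move: tS => /andP [_ /forallP /(_ j)]; rewrite -f1 fj /= => jk.
by move: (leq_ltn_trans (leq_trans Cj jk) hk); rewrite ltnn.
Qed.

End Comb.

Theorem theorem1p4 (q : nat -> nat)
  (hq2 : forall k : nat, (1 <= k)%N -> (2 <= q k)%N)
  (hliminf : exists r : rat, 3 < r /\
     exists K : nat, forall k : nat, (K <= k)%N -> r * k%:R <= (q k)%:R) :
  exists C : nat, forall (n : nat) (Acol : ('I_n -> option nat) -> Prop),
    (forall H, Acol H -> hyperplane q H) ->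
    (forall x, in_box q x -> exists H, Acol H /\ in_hyp H x) ->
    (exists H1 H2, Acol H1 /\ Acol H2 /\ H1 <> H2 /\ parallel H1 H2) \/
    (exists H, Acol H /\ fixed_within H C).
Proof.
case: hliminf => r [r3 [K hK]].
pose th := (r - 3) / (2 * r).
have r0 : 0 < 2 * r by lra.
have thr : th * (2 * r) = r - 3.
  rewrite /th mulrAC -mulrA divff ?mulr1 //; by rewrite gt_eqF.
have th0 : 0 < th by rewrite /th divr_gt0 //; lra.
have th1 : th < 1 by rewrite /th ltr_pdivrMr //; lra.
have [C hC] := @exists_C q r K th r3 th0 thr hK.
exists C => n Acol hH hcov.
case: (classic (exists H1 H2, Acol H1 /\ Acol H2 /\ H1 <> H2 /\ parallel H1 H2)) => [h|hnp].
  by left.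
right; apply: NNPP => hnf.
have Hinj : forall H1 H2, Acol H1 -> Acol H2 -> parallel H1 H2 -> H1 = H2.
  move=> H1 H2 a1 a2 p; apply: NNPP => hne; apply: hnp; exists H1, H2; by [].
have hfix : forall H, Acol H -> exists j : 'I_n, fixed H j && (C <= j)%N.
  move=> H aH; apply: NNPP => hn; apply: hnf; exists H; split => // j fj.
  apply: NNPP => hj; apply: hn; exists j; rewrite fj /=.
  by rewrite leqNgt; apply/negP.
have hq2' : forall j : nat, (2 <= q j.+1)%N by move=> j; apply: hq2.
pose x0 := fun _ : 'I_n => 1%N.
have hP0 : Psi q th n Acol 0 x0 < 1.
  apply: le_lt_trans (hC n); exact: base_bound.
have [x [_ hbox hsep]] := @invariant_ex q th n Acol hq2' th0 th1 x0 hP0 n (leqnn n).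
have hxbox : in_box q x by move=> k; apply: hbox.
have [H [aH hin]] := hcov x hxbox.
have hS := @hyp_of n Acol Hinj H aH.
have [j0 /andP [fj0 _]] := hfix H aH.
set S := [set j | fixed H j] in hS.
have j0S : j0 \in S by rewrite inE.
case: (arg_maxnP (fun i : 'I_n => nat_of_ord i) j0S) => k kS kmax.
have tk : topb n S k.
  rewrite /topb; apply/andP; split; first exact: kS.
  apply/forallP => j; apply/implyP => jS; exact: kmax.
have [j [_ nj]] := hsep S H k hS tk (ltn_ord k).
move: nj; rewrite /agree; case e: (H j) => [a|] //.
by rewrite (hin j a e) eqxx.
Qed.
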